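(* Let $X$ be a Banach space, $B$ an admissible Banach sequence space over $\mathbb{Z}$, and $(A_m)_{m\in\mathbb{Z}}$ a sequence of invertible bounded linear operators on $X$ with $\sup_{m\in\mathbb{Z}}\lVert A_m\rVert<\infty$ that admits an exponential dichotomy. Let $c>0$ be a constant as described in the context. Let $f_n\colon X\to X$, $n\in\mathbb{Z}$, be differentiable maps such that $\lVert d_xf_n\rVert\le c$ for all $x\in X$, $n\in\mathbb{Z}$; $\sup_{n\in\mathbb{Z}}\sup_{x\in X}\lVert f_n(x)\rVert<\infty$; and there exist $D>0$, $r>0$ with $\lVert d_xf_n-d_yf_n\rVert\le D\lVert x-y\rVert^r$ for all $x,y\in X$, $n\in\mathbb{Z}$. Put $F_n=A_n+f_n$ and consider the system $x_{n+1}=F_n(x_n)$, $n\in\mathbb{Z}$. Then this system has the $B$-Lipschitz shadowing property: there exists $L>0$ such that for every $\varepsilon>0$ sufficiently small and every $(L\varepsilon,B)$-pseudotrajectory $(y_n)_{n\in\mathbb{Z}}$ there exists a sequence $(x_n)_{n\in\mathbb{Z}}$ with $x_{n+1}=F_n(x_n)$ for all $n\in\mathbb{Z}$, $(x_n-y_n)_{n\in\mathbb{Z}}\in X_B$ and $\lVert (x_n-y_n)_{n\in\mathbb{Z}}\rVert_B\le\varepsilon$. Furthermore, if $\varepsilon>0$ is sufficiently small, the sequence $(x_n)_{n\in\mathbb{Z}}$ with these properties is unique.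
   Context: A normed sequence space over $\mathbb{Z}$ is a linear subspace $B$ of the space of all real sequences $\mathbf s=(s_n)_{n\in\mathbb{Z}}$ with a norm $\lVert\cdot\rVert_B$ such that whenever $\mathbf s'\in B$ and $|s_n|\le|s'_n|$ for all $n$, then $\mathbf s\in B$ and $\lVert\mathbf s\rVert_B\le\lVert\mathbf s'\rVert_B$; it is a Banach sequence space if it is complete. $B$ is admissible if (1) for each $n$, the indicator sequence $\chi_{\{n\}}$ lies in $B$ with $\lVert\chi_{\{n\}}\rVert_B>0$, and (2) for every $\mathbf s\in B$ and $m\in\mathbb{Z}$ the shifted sequence $(s_{n+m})_{n\in\mathbb{Z}}$ lies in $B$ and has the same norm; it is assumed that $\lVert\chi_{\{0\}}\rVert_B=1$. For a Banach space $X$, $X_B$ is the set of sequences $\mathbf x=(x_n)_{n\in\mathbb{Z}}\subset X$ with $(\lVert x_n\rVert)_{n\in\mathbb{Z}}\in B$, normed by $\lVert\mathbf x\rVert_B=\lVert(\lVert x_n\rVert)_{n\in\mathbb{Z}}\rVert_B$ (a Banach space). For invertible bounded operators $(A_m)$, set $\mathcal A(m,n)=A_{m-1}\cdots A_n$ for $m>n$, $\mathrm{Id}$ for $m=n$, $A_m^{-1}\cdots A_{n-1}^{-1}$ for $m<n$. $(A_m)$ admits an exponential dichotomy if there are projections $P_m$ on $X$ with $P_{m+1}A_m=A_mP_m$ and constants $C,\lambda>0$ with $\lVert\mathcal A(m,n)P_n\rVert\le Ce^{-\lambda(m-n)}$ for $m\ge n$ and $\lVert\mathcal A(m,n)(\mathrm{Id}-P_n)\rVert\le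 Ce^{-\lambda(n-m)}$ for $m\le n$. The constant $c>0$ is such that there is $K>0$ for which every sequence $(B_m)_{m\in\mathbb{Z}}$ of bounded linear operators on $X$ with $\sup_m\lVert A_m-B_m\rVert\le c$ admits an exponential dichotomy, and the operator $\mathbb B$ on $X_B$ given by $(\mathbb B\mathbf x)_n=B_{n-1}x_{n-1}$ has $\mathrm{Id}-\mathbb B$ invertible with $\lVert(\mathrm{Id}-\mathbb B)^{-1}\rVert\le K$ (such $c$ exists because $(A_m)$ admits an exponential dichotomy). Given $\delta>0$, a sequence $(y_n)_{n\in\mathbb{Z}}\subset X$ is a $(\delta,B)$-pseudotrajectory for $x_{n+1}=F_n(x_n)$ if $(y_{n+1}-F_n(y_n))_{n\in\mathbb{Z}}\in X_B$ and $\lVert(y_{n+1}-F_n(y_n))_{n\in\mathbb{Z}}\rVert_B\le\delta$. *)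

(* Defs.v *)
From HB Require Import structures.
From mathcomp Require Import all_boot all_order all_algebra.
From mathcomp Require Import all_classical all_reals all_analysis.
Set Implicit Arguments. Unset Strict Implicit. Unset Printing Implicit Defensive.
Import Order.TTheory GRing.Theory Num.Theory.
Import numFieldNormedType.Exports.
Local Open Scope ring_scope.
Local Open Scope classical_set_scope.

Section SeqSpace.
Variable R : realType.

Definition seq_indicator (n : int) : int -> R := fun k => if k == n then 1 else 0.
Definition seq_shift (s : int -> R) (m : int) : int -> R := fun n => s (n + m).

(* B is given by its carrier [mem] and its norm [bnorm] (only meaningful on mem). *)
Record admissible_banach_seq_space (mem : set (int -> R)) (bnorm : (int -> R) -> R)
  : Prop := {
  bss_mem0 : mem (fun _ => 0);
  bss_memD : forall s t, mem s -> mem t -> mem (fun n => s n + t n);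
  bss_memZ : forall (a : R) s, mem s -> mem (fun n => a * s n);
  bss_norm_ge0 : forall s, mem s -> 0 <= bnorm s;
  bss_norm_eq0 : forall s, mem s -> bnorm s = 0 -> forall n, s n = 0;
  bss_normD : forall s t, mem s -> mem t -> bnorm (fun n => s n + t n) <= bnorm s + bnorm t;
  bss_normZ : forall (a : R) s, mem s -> bnorm (fun n => a * s n) = `|a| * bnorm s;
  bss_solid : forall s s', mem s' -> (forall n, `|s n| <= `|s' n|) ->
     mem s /\ bnorm s <= bnorm s';
  bss_complete : forall u : nat -> int -> R, (forall k, mem (u k)) ->
     (forall e : R, 0 < e -> exists N : nat, forall k l : nat, (N <= k)%N -> (N <= l)%N ->
        bnorm (fun n => u k n - u l n) < e) ->
     exists s, mem s /\ (forall e : R, 0 < e -> exists N : nat, forall k : nat, (N <= k)%N ->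
        bnorm (fun n => u k n - s n) < e);
  bss_indicator : forall n, mem (seq_indicator n) /\ 0 < bnorm (seq_indicator n);
  bss_shift : forall s m, mem s -> mem (seq_shift s m) /\ bnorm (seq_shift s m) = bnorm s;
  bss_indicator0 : bnorm (seq_indicator 0) = 1
}.
End SeqSpace.

Section XB.
Variables (R : realType) (X : normedModType R).
Definition XB_mem (mem : set (int -> R)) (x : int -> X) : Prop :=
  mem (fun n => `|x n|).
Definition XB_norm (bnorm : (int -> R) -> R) (x : int -> X) : R :=
  bnorm (fun n => `|x n|).

Definition bounded_linear (T : X -> X) : Prop :=
  (forall (a : R) u v, T (a *: u + v) = a *: T u + T v) /\
  (exists M : R, forall x, `|T x| <= M * `|x|).

(* cocycle: F = forward maps, G = backward maps (inverses on the relevant spaces) *)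
Definition cocycle (F G : int -> X -> X) (m n : int) : X -> X :=
  if n < m then (fun v => (iter `|m - n|%N (fun p : int * X => (p.1 + 1, F p.1 p.2)) (n, v)).2)
  else if m == n then id
  else (fun v => (iter `|n - m|%N (fun p : int * X => (p.1 - 1, G (p.1 - 1) p.2)) (n, v)).2).

(* For invertible B_m this is exactly the definition of
   the paper (Binv m necessarily agrees with B_m^{-1} on ker P_{m+1}); for
   general bounded B_m it is the standard one: B_m maps ker P_m bijectively
   onto ker P_{m+1}, with Binv m the inverse of that restriction. *)
Definition exp_dichotomy (B : int -> X -> X) : Prop :=
  exists (P Binv : int -> X -> X) (C lam : R), 0 < C /\ 0 < lam /\
  (forall m, bounded_linear (P m) /\ forall x, P m (P m x) = P m x) /\
  (forall m x, P (m + 1) (B m x) = B m (P m x)) /\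
  (forall m y, P (m + 1) y = 0 -> P m (Binv m y) = 0 /\ B m (Binv m y) = y) /\
  (forall m x, P m x = 0 -> Binv m (B m x) = x) /\
  (forall m n : int, n <= m -> forall v,
      `|cocycle B Binv m n (P n v)| <= C * expR (- lam * (m - n)%:~R) * `|v|) /\
  (forall m n : int, m <= n -> forall v,
      `|cocycle B Binv m n (v - P n v)| <= C * expR (- lam * (n - m)%:~R) * `|v|).

Definition admissible_perturbation_constant (mem : set (int -> R))
    (bnorm : (int -> R) -> R) (A : int -> X -> X) (c : R) : Prop :=
  0 < c /\ exists K : R, 0 < K /\
  forall B : int -> X -> X,
    (forall m, bounded_linear (B m)) ->
    (forall m x, `|A m x - B m x| <= c * `|x|) ->
    exp_dichotomy B /\
    (* Id - BB is a bounded invertible operator on X_B with inverse norm <= K,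
       where (BB x)_n = B_{n-1} x_{n-1} *)
    (forall x, XB_mem mem x -> XB_mem mem (fun n => x n - B (n - 1) (x (n - 1)))) /\
    (forall y, XB_mem mem y ->
       exists x, XB_mem mem x /\ (forall n, x n - B (n - 1) (x (n - 1)) = y n) /\
                 XB_norm bnorm x <= K * XB_norm bnorm y) /\
    (forall x x', XB_mem mem x -> XB_mem mem x' ->
       (forall n, x n - B (n - 1) (x (n - 1)) = x' n - B (n - 1) (x' (n - 1))) -> x = x').

Definition pseudotrajectory (mem : set (int -> R)) (bnorm : (int -> R) -> R)
    (F : int -> X -> X) (delta : R) (y : int -> X) : Prop :=
  XB_mem mem (fun n => y (n + 1) - F n (y n)) /\
  XB_norm bnorm (fun n => y (n + 1) - F n (y n)) <= delta.
End XB.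

(* Main.v *)
Require Import Defs.
From HB Require Import structures.
From mathcomp Require Import all_boot all_order all_algebra.
From mathcomp Require Import all_classical all_reals all_analysis.
From mathcomp Require Import ring lra.
Import Order.TTheory GRing.Theory Num.Theory.
Import numFieldNormedType.Exports.
Local Open Scope ring_scope.
Local Open Scope classical_set_scope.

Lemma diff_eps (R : realType) (X : normedModType R) (g : X -> X) (x : X) :
  differentiable g x -> forall e : R, 0 < e -> exists2 d : R, 0 < d &
  forall u : X, `|u| < d -> `|g (x + u) - g x - 'd g x u| <= e * `|u|.
Proof.
move=> /diff_locally H e e0.
have HH := (eqaddoP _ _ _ _).1 H e e0.
have /nbhs_ballP [d d0 Hd] : nbhs (0:X) _ := HH.
exists d => // u Hu.
have := Hd u. rewrite -ball_normE /ball_ /= sub0r normrN => /(_ Hu) /=.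
move=> h; apply: le_trans h; rewrite le_eqVlt; apply/orP; left; apply/eqP; congr (`|_|). by rewrite !fctE /= [u + x]addrC opprD addrA.
Qed.

Lemma mvt_vec (R : realType) (X : normedModType R) (h : R -> X) (M : R) :
  (forall t, 0 <= t -> t <= 1 -> exists2 v : X, `|v| <= M &
     forall e, 0 < e -> exists2 d, 0 < d &
       forall s, `|s| < d -> `|h (t + s) - h t - s *: v| <= e * `|s|) ->
  `|h 1 - h 0| <= M.
Proof.
move=> Hd; apply/ler_addgt0Pr => e e0.
pose eps := e / 2.
have eps0 : 0 < eps by rewrite divr_gt0.
pose S := [set t : R | (0 <= t) && (t <= 1) /\ forall s, 0 <= s -> s <= t ->
   `|h s - h 0| <= (M + eps) * s + eps].
have S0 : S 0.
  split; first by rewrite lexx ler01.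
  move=> s s0 s0'. have -> : s = 0 by apply/eqP; rewrite eq_le s0 s0'.
  by rewrite subrr normr0 mulr0 add0r ltW.
have hsS : has_sup S.
  split; first by exists 0.
  by exists 1 => t [/andP [_ ?] _].
pose tau := sup S.
have tau_ub : forall t, S t -> t <= tau := sup_upper_bound hsS.
have tau0 : 0 <= tau := tau_ub 0 S0.
have tau1 : tau <= 1.
  by apply: ge_sup; [exists 0 | move=> t [/andP [_ ?] _]].
have [v vM Hv] := Hd tau tau0 tau1.
have [d d0 Hdd] := Hv eps eps0.
have Hloc : forall u, `|u - tau| < d -> `|h u - h tau| <= (M + eps) * `|u - tau|.
  move=> u Hu. have := Hdd (u - tau) Hu.
  rewrite [tau + _]addrC subrK => H1.
  have -> : h u - h tau = (h u - h tau - (u - tau) *: v) + (u - tau) *: v.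
    by rewrite subrK.
  apply: le_trans (ler_normD _ _) _.
  rewrite normrZ mulrDl addrC.
  apply: lerD => //.
  by rewrite mulrC ler_wpM2r.
have [s' Ss' Hs'] := sup_adherent d0 hsS.
have s'tau : s' <= tau := tau_ub _ Ss'.
have key : forall T, tau <= T -> T <= 1 -> T <= tau + d / 2 -> S T.
  move=> T tT T1 Td. split; first by rewrite T1 andbT (le_trans tau0 tT).
  move=> u u0 uT.
  case: (ltP u tau) => [ut|tu].
    have ut2 : 0 < tau - u by rewrite subr_gt0.
    have [w Sw Hw] := sup_adherent ut2 hsS.
    rewrite opprB addrC subrK in Hw.
    by apply: Sw.2 => //; apply: ltW.
  have H1 : `|h s' - h 0| <= (M + eps) * s' + eps.
    by case: Ss' => /andP [s0 _] Hs; apply: Hs.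
  have -> : h u - h 0 = (h u - h tau) + (h tau - h s') + (h s' - h 0).
    by rewrite !addrA subrK subrK.
  apply: le_trans (ler_normD _ _) _.
  apply: le_trans (lerD (ler_normD _ _) (lexx _)) _.
  have E1 : `|h u - h tau| <= (M + eps) * (u - tau).
    have n1 : `|u - tau| = u - tau by rewrite ger0_norm // subr_ge0.
    rewrite -n1; apply: Hloc; rewrite n1.
    apply: le_lt_trans (_ : d / 2 < d); last by rewrite ltr_pdivrMr // ltr_pMr // ltr1n.
    by rewrite lerBlDl (le_trans uT Td).
  have E2 : `|h tau - h s'| <= (M + eps) * (tau - s').
    have n1 : `|s' - tau| = tau - s' by rewrite distrC ger0_norm // subr_ge0.
    rewrite distrC -n1; apply: Hloc; rewrite n1.
    by rewrite ltrBlDl -ltrBlDr.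
  apply: le_trans (lerD (lerD E1 E2) H1) _.
  rewrite addrA -!mulrDr. rewrite le_eqVlt; apply/orP; left; apply/eqP. congr (_ * _ + _).
  by rewrite addrA subrK subrK.
case: (leP (tau + d / 2) 1) => [H1|H1].
  have hd2 : tau <= tau + d / 2 by rewrite lerDl divr_ge0 // ltW.
  have := tau_ub _ (key _ hd2 H1 (lexx _)).
  by rewrite gerDl leNgt divr_gt0 ?ltr0n.
have [_ S1] := key 1 tau1 (lexx _) (ltW H1).
have := S1 1 ler01 (lexx _).
by rewrite mulr1 -addrA /eps -splitr.
Qed.

Lemma zaux (V : zmodType) (x a b c d : V) :
  x - (a + b) - (c - a) - (d - b) = x - c - d.
Proof.
rewrite opprD !opprB !addrA.
rewrite [_ - b + a]addrAC subrK [_ - c + b]addrAC subrK.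
done.
Qed.

Lemma holder_est (R : realType) (X : normedModType R) (g : X -> X) (D r rho : R) (a b y : X) :
  (forall x, differentiable g x) -> 0 <= D -> 0 <= r ->
  (forall x y v, `|'d g x v - 'd g y v| <= D * `|x - y| `^ r * `|v|) ->
  `|a - y| <= rho -> `|b - y| <= rho ->
  `|g a - g b - 'd g y (a - b)| <= D * rho `^ r * `|a - b|.
Proof.
move=> gd D0 r0 Hh ay hby.
pose xt := fun t : R => b + t *: (a - b).
pose h := fun t : R => g (xt t) - 'd g y (xt t).
have -> : g a - g b - 'd g y (a - b) = h 1 - h 0.
  rewrite /h /xt scale1r scale0r addr0 [b + _]addrC subrK linearB /=.
  by rewrite !opprB addrACA [RHS]addrACA [- g b + _]addrC.
apply: mvt_vec => t t0 t1.
exists ('d g (xt t) (a - b) - 'd g y (a - b)).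
  apply: le_trans (Hh _ _ _) _.
  rewrite ler_wpM2r // ler_wpM2l //.
  have rho0 : 0 <= rho by apply: le_trans ay.
  apply: ge0_ler_powR => //; rewrite ?nnegrE //.
  have -> : xt t - y = (1 - t) *: (b - y) + t *: (a - y).
    rewrite /xt scalerBl scale1r -[RHS]addrA [- _ + _]addrC -scalerBr opprB [a - y + _]addrA subrK.
    by rewrite addrAC.

  apply: le_trans (ler_normD _ _) _.
  rewrite !normrZ (ger0_norm t0) ger0_norm ?subr_ge0 //.
  apply: le_trans (lerD (ler_wpM2l _ hby) (ler_wpM2l t0 ay)) _.
    by rewrite subr_ge0.
  by rewrite -mulrDl subrK mul1r.
move=> e e0.
pose e' := e / (`|a - b| + 1).
have nab : 0 < `|a - b| + 1 by rewrite ltr_wpDl.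
have e'0 : 0 < e' by rewrite divr_gt0.
have [d d0 Hd] := @diff_eps _ _ g (xt t) (gd (xt t)) e' e'0.
exists (d / (`|a - b| + 1)); first by rewrite divr_gt0.
move=> s Hs.
have Hu : `|s *: (a - b)| < d.
  rewrite normrZ. apply: le_lt_trans (_ : `|s| * (`|a - b| + 1) < d).
    by rewrite ler_wpM2l // lerDl.
  by rewrite -ltr_pdivlMr.
have := Hd _ Hu.
have -> : h (t + s) - h t - s *: ('d g (xt t) (a - b) - 'd g y (a - b)) =
    g (xt t + s *: (a - b)) - g (xt t) - 'd g (xt t) (s *: (a - b)).
  have E1 : xt (t + s) = xt t + s *: (a - b) by rewrite /xt scalerDl addrA.
  have E2 : 'd g y (xt t + s *: (a - b)) = 'd g y (xt t) + s *: 'd g y (a - b).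
    by rewrite linearD linearZ.
  rewrite /h E1 E2 (scalerBr s ('d g (xt t) (a - b))) zaux.
  have E3 : 'd g (xt t) (s *: (a - b)) = s *: 'd g (xt t) (a - b) by rewrite linearZ.
  by rewrite E3.
move=> H1; apply: le_trans H1 _.
rewrite normrZ mulrA mulrAC ler_wpM2r // /e' mulrAC ler_pdivrMr // ler_wpM2l ?(ltW e0) //.

by rewrite lerDl.
Qed.

Lemma geo_small (R : realType) (C : R) : forall e : R, 0 < e ->
  exists N : nat, forall k, (N <= k)%N -> C * (2^-1) ^+ k < e.
Proof.
move=> e e0.
have h : `|(2^-1 : R)| < 1.
  by rewrite ger0_norm ?invr_ge0 ?ler0n // invf_lt1 ?ltr1n.
have := @cvg_geometric R C (2^-1) h.
move/cvgrPdist_lt => /(_ e e0) [N _ HN].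
exists N => k Nk. have := HN k Nk. rewrite /geometric /= sub0r normrN.
by apply: le_lt_trans; apply: ler_norm.
Qed.

Lemma geo_lim (R : realType) (X : completeNormedModType R) (u : nat -> X) (q : nat -> R) :
  (forall k l, (k <= l)%N -> `|u l - u k| <= q k) ->
  (forall e, 0 < e -> exists N : nat, forall k, (N <= k)%N -> q k < e) ->
  exists z : X, forall k, `|z - u k| <= q k.
Proof.
move=> Hu Hq.
have : cvg (u @ \oo).
  suff : cauchy (u @ \oo) by exact: cauchy_cvg.
  suff : cauchy_ex (u @ \oo) by exact: cauchy_exP.
  move=> e e0; rewrite /fmapE -ball_normE /ball_.
  have [N HN] := Hq e e0.
  exists (u N), N => // m Nm /=.
  by rewrite distrC; apply: le_lt_trans (Hu _ _ Nm) (HN _ (leqnn _)).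
move=> /cvg_ex [l Hl]. exists l => k.
apply/ler_addgt0Pr => e e0.
have /cvgrPdist_lt /(_ e e0) [N _ HN] := Hl.
have := HN (maxn N k) (leq_maxl _ _) => H1.
have -> : l - u k = (l - u (maxn N k)) + (u (maxn N k) - u k) by rewrite addrA subrK.
apply: le_trans (ler_normD _ _) _.
rewrite addrC; apply: lerD; first exact: Hu (leq_maxr _ _).
exact: ltW.
Qed.

Lemma zsub2 (V : zmodType) (a b c d : V) : (a + b) - (c + d) = (a - c) + (b - d).
Proof. by rewrite opprD addrACA. Qed.
Lemma zoN (V : zmodType) (x y : V) : - x - - y = - (x - y).
Proof. by rewrite opprB opprK addrC. Qed.
Lemma zA1 (V : zmodType) (a a' b c c' g : V) :
  (a - b - c - g) - (a' - b - c' - g) = a - a' - (c - c').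
Proof.
rewrite zsub2 subrr addr0 zsub2 zsub2 subrr addr0.
by rewrite opprK opprB [- c + _]addrC.
Qed.
Lemma zA3 (V : zmodType) (a b c a' b' c' : V) :
  (a - b - c) - (a' - b' - c') = (a - a') - (b - b') - (c - c').
Proof. by rewrite [LHS]zsub2 [X in X + _]zsub2 !zoN. Qed.
Lemma zA4 (V : zmodType) (y1 p q d a b : V) :
  y1 + ((p - q - d - (y1 - (a + q))) + (b + d)) = (a + b) + p.
Proof.
apply/eqP; rewrite -subr_eq0 !opprD !opprK !addrA.
rewrite [y1 + p - q - d - y1]addrAC [y1 + p - q - y1]addrAC [y1 + p - y1]addrAC subrr add0r.
rewrite [p - q - d + a + q]addrAC [p - q - d + q]addrAC subrK.
rewrite [p - d + a + b + d]addrAC [p - d + a + d]addrAC subrK.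
by rewrite [p + a + b - a]addrAC addrK addrK subrr.
Qed.
Lemma zuv (V : zmodType) (u v d : V) : (u + v) - (u + d) = v - d.
Proof. by rewrite zsub2 subrr add0r. Qed.
Lemma zxy (V : zmodType) (x x' y : V) : (x - y) - (x' - y) = x - x'.
Proof. by rewrite zsub2 subrr addr0. Qed.
Lemma zyz (V : zmodType) (y z z' : V) : (y + z) - (y + z') = z - z'.
Proof. by rewrite zsub2 subrr add0r. Qed.
Lemma zyz0 (V : zmodType) (y z : V) : (y + z) - y = z.
Proof. by rewrite addrC addKr. Qed.

Set Implicit Arguments. Unset Strict Implicit.

Section BS.
Variables (R : realType) (mem : set (int -> R)) (bnorm : (int -> R) -> R).
Hypothesis HB : admissible_banach_seq_space mem bnorm.

Lemma bnorm_ind n : bnorm (seq_indicator R n) = 1.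
Proof.
have -> : seq_indicator R n = seq_shift (seq_indicator R 0) (- n).
  apply/funext => k; rewrite /seq_shift /seq_indicator subr_eq0 //.
have [_ ->] := bss_shift HB (- n) (bss_indicator HB 0).1.
exact: bss_indicator0 HB.
Qed.

Lemma pt_le s n : mem s -> `|s n| <= bnorm s.
Proof.
move=> ms.
have H1 : forall k, `| `|s n| * seq_indicator R n k| <= `|s k|.
  move=> k; rewrite /seq_indicator; case: eqP => [->|_].
    by rewrite mulr1 normr_id.
  by rewrite mulr0 normr0.
have [_ H2] := bss_solid HB ms H1.
by move: H2; rewrite (bss_normZ HB) ?bnorm_ind ?mulr1 ?normr_id //; case: (bss_indicator HB n).
Qed.

Lemma bnorm0 : bnorm (fun _ => 0) = 0.
Proof.
have := bss_normZ HB 0 (bss_mem0 HB).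
have -> : (fun n : int => (0 : R) * 0) = (fun _ => 0) by apply/funext => n; rewrite mulr0.
by rewrite normr0 mul0r.
Qed.

Variable X : normedModType R.

Lemma xb_solid (v w : int -> X) (k : R) : XB_mem mem w -> 0 <= k ->
  (forall n, `|v n| <= k * `|w n|) -> XB_mem mem v /\ XB_norm bnorm v <= k * XB_norm bnorm w.
Proof.
move=> mw k0 H.
have mkw := bss_memZ HB k mw.
have H1 : forall n, `| `|v n| | <= `|k * `|w n| |.
  by move=> n; rewrite normr_id ger0_norm ?mulr_ge0.
have [m1 n1] := bss_solid HB mkw H1.
split => //. move: n1; rewrite (bss_normZ HB) // ger0_norm //.
Qed.

Lemma xb_solid1 (v w : int -> X) : XB_mem mem w ->
  (forall n, `|v n| <= `|w n|) -> XB_mem mem v /\ XB_norm bnorm v <= XB_norm bnorm w.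
Proof.
move=> mw H; have := @xb_solid v w 1 mw ler01.
by rewrite mul1r; apply => n; rewrite mul1r.
Qed.

Lemma xb_add (v w : int -> X) : XB_mem mem v -> XB_mem mem w ->
  XB_mem mem (fun n => v n + w n) /\
  XB_norm bnorm (fun n => v n + w n) <= XB_norm bnorm v + XB_norm bnorm w.
Proof.
move=> mv mw.
have ms := bss_memD HB mv mw.
have H1 : forall n, `| `|v n + w n| | <= `| `|v n| + `|w n| |.
  by move=> n; rewrite normr_id ger0_norm ?addr_ge0 // ler_normD.
have [m1 n1] := bss_solid HB ms H1.
split; first exact: m1.
apply: le_trans n1 _; exact: (bss_normD HB mv mw).
Qed.

Lemma xb_opp (v : int -> X) : XB_mem mem v ->
  XB_mem mem (fun n => - v n) /\ XB_norm bnorm (fun n => - v n) = XB_norm bnorm v.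
Proof.
move=> mv.
rewrite /XB_mem /XB_norm.
have -> : (fun n => `|- v n|) = (fun n => `|v n|) by apply/funext => n; rewrite normrN.
by [].
Qed.

Lemma xb_sub (v w : int -> X) : XB_mem mem v -> XB_mem mem w ->
  XB_mem mem (fun n => v n - w n) /\
  XB_norm bnorm (fun n => v n - w n) <= XB_norm bnorm v + XB_norm bnorm w.
Proof.
move=> mv mw; have [mw' nw'] := xb_opp mw.
by have := xb_add mv mw'; rewrite nw'.
Qed.

Lemma xb_norm_ge0 (v : int -> X) : XB_mem mem v -> 0 <= XB_norm bnorm v.
Proof. exact: bss_norm_ge0. Qed.

Lemma xb_pt (v : int -> X) n : XB_mem mem v -> `|v n| <= XB_norm bnorm v.
Proof. move=> mv; have := @pt_le _ n mv; by rewrite normr_id. Qed.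

Lemma xb_eq0 (v : int -> X) : XB_mem mem v -> XB_norm bnorm v = 0 -> forall n, v n = 0.
Proof. move=> mv h0 n; apply/normr0_eq0; exact: (bss_norm_eq0 HB mv h0 n). Qed.

Lemma xb_shift (v : int -> X) (m : int) : XB_mem mem v ->
  XB_mem mem (fun n => v (n + m)) /\ XB_norm bnorm (fun n => v (n + m)) = XB_norm bnorm v.
Proof. move=> mv; exact: (bss_shift HB m mv). Qed.

Lemma xb_zero : XB_mem mem (fun _ : int => (0 : X)) /\ XB_norm bnorm (fun _ : int => (0 : X)) = 0.
Proof.
rewrite /XB_mem /XB_norm.
have -> : (fun _ : int => `|(0 : X)|) = (fun _ => 0) by apply/funext => n; rewrite normr0.
by split; [exact: bss_mem0 HB | exact: bnorm0].
Qed.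

End BS.

Section BL.
Variables (R : realType) (mem : set (int -> R)) (bnorm : (int -> R) -> R).
Hypothesis HB : admissible_banach_seq_space mem bnorm.
Variable X : completeNormedModType R.



Lemma real_memB (s t : int -> R) : mem s -> mem t -> mem (fun n => s n - t n).
Proof.
move=> ms mt.
have := bss_memD HB ms (bss_memZ HB (-1) mt).
have -> : (fun n => s n + -1 * t n) = (fun n => s n - t n).
  by apply/funext => n; rewrite mulN1r.
by [].
Qed.

Lemma real_swap (s t : int -> R) : mem s -> mem t ->
  bnorm (fun n => t n - s n) = bnorm (fun n => s n - t n).
Proof.
move=> ms mt.
have := bss_normZ HB (-1) (real_memB ms mt).
have -> : (fun n => -1 * (s n - t n)) = (fun n => t n - s n).
  by apply/funext => n; rewrite mulN1r opprB.
by rewrite normrN normr1 mul1r.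
Qed.

Lemma xb_limit (zs : nat -> int -> X) (eps : R) (q : nat -> R) :
  (forall k, XB_mem mem (zs k) /\ XB_norm bnorm (zs k) <= eps) ->
  (forall k l, (k <= l)%N -> XB_norm bnorm (fun n => zs l n - zs k n) <= q k) ->
  (forall e, 0 < e -> exists N : nat, forall k, (N <= k)%N -> q k < e) ->
  exists z, XB_mem mem z /\ XB_norm bnorm z <= eps /\ forall n k, `|z n - zs k n| <= q k.
Proof.
move=> Hz Hc Hq.
have Hpt : forall n, exists zn : X, forall k, `|zn - zs k n| <= q k.
  move=> n; apply: geo_lim (Hq) => k l kl.
  apply: le_trans (Hc _ _ kl).
  apply: (xb_pt HB n).
  exact: (xb_sub HB (Hz l).1 (Hz k).1).1.
have [z Hzz] := choice Hpt.
exists z.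
pose u := fun k n => `|zs k n|.
have mu : forall k, mem (u k) by move=> k; exact: (Hz k).1.
have Hdiff : forall k l, (k <= l)%N -> bnorm (fun n => u k n - u l n) <= q k.
  move=> k l kl.
  have H1 : forall n, `|u k n - u l n| <= `| `|zs l n - zs k n| |.
    by move=> n; rewrite normr_id distrC ler_dist_dist.
  have [_ H2] := bss_solid HB (xb_sub HB (Hz l).1 (Hz k).1).1 H1.
  exact: le_trans H2 (Hc _ _ kl).
have [s [ms Hs]] : exists s, mem s /\ (forall e : R, 0 < e -> exists N : nat, forall k : nat, (N <= k)%N ->
        bnorm (fun n => u k n - s n) < e).
  apply: (bss_complete HB mu) => e e0.
  have [N HN] := Hq e e0.
  exists N => k l Nk Nl.
  case: (leqP k l) => kl.
    exact: le_lt_trans (Hdiff _ _ kl) (HN _ Nk).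
  rewrite real_swap //.
  exact: le_lt_trans (Hdiff _ _ (ltnW kl)) (HN _ Nl).
have Hsz : (fun n => `|z n|) = s.
  apply/funext => n; apply/eqP; rewrite -subr_eq0 -normr_le0.
  apply/ler_addgt0Pr => e e0; rewrite add0r.
  have e20 : 0 < e / 2 by rewrite divr_gt0.
  have [N1 HN1] := Hq _ e20.
  have [N2 HN2] := Hs _ e20.
  pose k := maxn N1 N2.
  have -> : `|z n| - s n = (`|z n| - u k n) + (u k n - s n) by rewrite addrA subrK.
  apply: le_trans (ler_normD _ _) _.
  rewrite [e]splitr; apply: lerD.
    apply: le_trans (ler_dist_dist _ _) _.
    apply: le_trans (Hzz n k) _; apply: ltW; apply: HN1; exact: leq_maxl.
  apply: le_trans (pt_le HB n (real_memB (mu k) ms)) _.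
  apply: ltW; apply: HN2; exact: leq_maxr.
split; first by rewrite /XB_mem Hsz.
split => //.
rewrite /XB_norm Hsz.
apply/ler_addgt0Pr => e e0.
have [N HN] := Hs _ e0.
have -> : s = (fun n => u N n + (s n - u N n)) by apply/funext => n; rewrite subrKC.
apply: le_trans (bss_normD HB (mu N) (real_memB ms (mu N))) _.
apply: lerD; first exact: (Hz N).2.
rewrite (real_swap (mu N) ms).
exact: ltW (HN _ (leqnn _)).
Qed.
End BL.

Section BLin.
Variables (R : realType) (X : normedModType R).
Lemma bl_add (T : X -> X) : bounded_linear T -> forall u v, T (u + v) = T u + T v.
Proof. by move=> [HT _] u v; have := HT 1 u v; rewrite !scale1r. Qed.
Lemma bl_0 (T : X -> X) : bounded_linear T -> T 0 = 0.
Proof.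
move=> HT; have := bl_add HT 0 0; rewrite addr0 -{1}[T 0]addr0 => /addrI.
by move=> <-.
Qed.
Lemma bl_opp (T : X -> X) : bounded_linear T -> forall v, T (- v) = - T v.
Proof.
move=> HT v; have := HT.1 (-1) v 0; rewrite !addr0 bl_0 // addr0 !scaleN1r.
by [].
Qed.
Lemma bl_sub (T : X -> X) : bounded_linear T -> forall u v, T (u - v) = T u - T v.
Proof. by move=> HT u v; rewrite bl_add // bl_opp. Qed.
End BLin.

Lemma eqle (R : realType) (a b : R) : a = b -> a <= b.
Proof. by move=> ->. Qed.

Theorem theorem3p4 (R : realType) (X : completeNormedModType R)
  (mem : set (int -> R)) (bnorm : (int -> R) -> R)
  (A : int -> X -> X) (c : R) (f : int -> X -> X) (D r : R) :
  admissible_banach_seq_space mem bnorm ->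
  (forall m, bounded_linear (A m)) ->
  (forall m, exists Ainv : X -> X, bounded_linear Ainv /\
       (forall x, A m (Ainv x) = x) /\ (forall x, Ainv (A m x) = x)) ->
  (exists M : R, forall m x, `|A m x| <= M * `|x|) ->
  exp_dichotomy A ->
  admissible_perturbation_constant mem bnorm A c ->
  (forall n x, differentiable (f n) x) ->
  (forall n x v, `|'d (f n) x v| <= c * `|v|) ->
  (exists M : R, forall n x, `|f n x| <= M) ->
  0 < D -> 0 < r ->
  (forall n x y v, `|'d (f n) x v - 'd (f n) y v| <= D * `|x - y| `^ r * `|v|) ->
  let F := fun n x => A n x + f n x in
  exists L : R, 0 < L /\ exists eps0 : R, 0 < eps0 /\
  forall eps : R, 0 < eps -> eps <= eps0 ->
  forall y : int -> X, pseudotrajectory mem bnorm F (L * eps) y ->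
    (exists x : int -> X, (forall n, x (n + 1) = F n (x n)) /\
       XB_mem mem (fun n => x n - y n) /\ XB_norm bnorm (fun n => x n - y n) <= eps) /\
    (forall x x' : int -> X,
       (forall n, x (n + 1) = F n (x n)) -> XB_mem mem (fun n => x n - y n) ->
       XB_norm bnorm (fun n => x n - y n) <= eps ->
       (forall n, x' (n + 1) = F n (x' n)) -> XB_mem mem (fun n => x' n - y n) ->
       XB_norm bnorm (fun n => x' n - y n) <= eps -> x = x').
Proof.
move=> HB Alin _ [MA HMA] _ [c0 [K [K0 HK]]] fd fdc _ D0 r0 Hh F.
pose L := (2 * K)^-1.
pose eps0 := ((2 * K * D)^-1) `^ (r^-1).
have L0 : 0 < L by rewrite invr_gt0 mulr_gt0.
exists L; split => //.
have eps00 : 0 < eps0 by rewrite powR_gt0 // invr_gt0 !mulr_gt0.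
exists eps0; split => //.
have Hth0 : K * (D * eps0 `^ r) = 2^-1.
  rewrite /eps0 -powRrM mulVf ?gt_eqF // powRr1 ?invr_ge0 ?ltW ?mulr_gt0 //.
  field; by rewrite !gt_eqF.
move=> eps eps_pos eps_le y [gmem gN].
pose g := fun n => y (n + 1) - F n (y n).
pose B := fun n v => A n v + 'd (f n) (y n) v.
have Blin : forall m, bounded_linear (B m).
  move=> m; split.
    move=> a u v; rewrite /B (Alin m).1 linearP scalerDr.
    by rewrite addrACA.
  exists (`|MA| + c) => v.
  apply: le_trans (ler_normD _ _) _.
  rewrite mulrDl; apply: lerD => //.
  apply: le_trans (HMA m v) _; rewrite ler_wpM2r // real_ler_norm //.
  exact: num_real.
have Bclose : forall m x, `|A m x - B m x| <= c * `|x|.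
  by move=> m x; rewrite /B opprD addrA subrr add0r normrN.
have [_ [_ [Hsolve Huniq]]] := HK B Blin Bclose.
pose theta := D * eps `^ r.
have theta0 : 0 <= theta by rewrite mulr_ge0 ?powR_ge0 ?ltW.
have Kth : K * theta <= 2^-1.
  rewrite -Hth0; apply: ler_wpM2l; first exact: ltW.
  apply: ler_wpM2l; first exact: ltW.
  apply: (ge0_ler_powR (ltW r0)) => //; rewrite nnegrE; exact: ltW.
pose Phi := fun (z : int -> X) (n : int) =>
  f n (y n + z n) - f n (y n) - 'd (f n) (y n) (z n) - g n.
pose Psi := fun (z : int -> X) (n : int) => Phi z (n - 1).
have P1 : forall z z' : int -> X, (forall k, `|z k| <= eps) -> (forall k, `|z' k| <= eps) ->
    forall n, `|Phi z n - Phi z' n| <= theta * `|z n - z' n|.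
  move=> z z' hz hz' n.
  rewrite /Phi zA1.
  have -> : 'd (f n) (y n) (z n) - 'd (f n) (y n) (z' n) = 'd (f n) (y n) (z n - z' n).
    by rewrite linearB.
  have := @holder_est R X (f n) D r eps (y n + z n) (y n + z' n) (y n) (fd n) (ltW D0) (ltW r0) (Hh n).
  rewrite !zyz0 zyz => /(_ (hz n) (hz' n)).
  by [].
have P2 : forall z z', XB_mem mem z -> XB_mem mem z' -> XB_norm bnorm z <= eps ->
    XB_norm bnorm z' <= eps ->
    XB_mem mem (fun n => Psi z n - Psi z' n) /\
    XB_norm bnorm (fun n => Psi z n - Psi z' n) <= theta * XB_norm bnorm (fun n => z n - z' n).
  move=> z z' mz mz' Nz Nz'.
  have [mw _] := xb_sub HB mz mz'.
  have [mws Nws] := xb_shift HB (-1) mw.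
  rewrite -Nws.
  apply: (xb_solid HB mws theta0) => n.
  apply: P1 => k.
    exact: le_trans (xb_pt HB k mz) Nz.
  exact: le_trans (xb_pt HB k mz') Nz'.
have [m0 N0] := @xb_zero _ mem bnorm HB X.
have Psi0 : Psi (fun _ => 0) = fun n => - g (n - 1).
  apply/funext => n; rewrite /Psi /Phi addr0 subrr linear0 subr0.
  by rewrite sub0r.
have P4 : forall z, XB_mem mem z -> XB_norm bnorm z <= eps ->
    XB_mem mem (Psi z) /\ XB_norm bnorm (Psi z) <= L * eps + theta * eps.
  move=> z mz Nz.
  have N0e : XB_norm bnorm (fun _ : int => (0 : X)) <= eps by rewrite N0 ltW.
  have [m1 N1] := P2 z (fun _ => 0) mz m0 Nz N0e.
  have [mg1 Ng1] := xb_opp bnorm gmem.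
  have [mg2 Ng2] := xb_shift HB (-1) mg1.
  rewrite Psi0 in m1 N1.
  have E : Psi z = fun n => (Psi z n - - g (n - 1)) + - g (n - 1).
    by apply/funext => n; rewrite subrK.
  have [m3 N3] := xb_add HB m1 mg2.
  rewrite E; split => //.
  apply: le_trans N3 _.
  rewrite addrC; apply: lerD.
    by rewrite Ng2 Ng1.
  apply: le_trans N1 _.
  have -> : (fun n => z n - 0) = z by apply/funext => n; rewrite subr0.
  by rewrite ler_wpM2l.
have Hex : forall w : int -> X, exists x : int -> X, XB_mem mem w ->
    XB_mem mem x /\ (forall n, x n - B (n - 1) (x (n - 1)) = w n) /\
    XB_norm bnorm x <= K * XB_norm bnorm w.
  move=> w; case: (pselect (XB_mem mem w)) => hw.
    by have [x hx] := Hsolve w hw; exists x.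
  by exists w.
have [Sol HSol] := boolp.choice Hex.
pose zs := fix zs (k : nat) : int -> X :=
  if k is k'.+1 then Sol (Psi (zs k')) else (fun _ => 0).
have Inv : forall k, XB_mem mem (zs k) /\ XB_norm bnorm (zs k) <= eps.
  elim => [|k [mk Nk]]; first by split => //; rewrite N0 ltW.
  have [mp Np] := P4 _ mk Nk.
  have [ms [_ Ns]] := HSol _ mp.
  split => //.
  apply: le_trans Ns _.
  apply: le_trans (ler_wpM2l (ltW K0) Np) _.
  have KL : K * L = 2^-1 by rewrite /L; field; rewrite gt_eqF.
  rewrite -mulrDl mulrA -[X in _ <= X]mul1r; apply: ler_wpM2r; first exact: ltW.
  rewrite mulrDr KL; lra.
have Badd : forall m u v, B m (u + v) = B m u + B m v by move=> m; exact: bl_add.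
have Bsub : forall m u v, B m (u - v) = B m u - B m v by move=> m; exact: bl_sub.
have Eq : forall k n, zs k.+1 n - B (n - 1) (zs k.+1 (n - 1)) = Psi (zs k) n.
  by move=> k; have [mp _] := P4 _ (Inv k).1 (Inv k).2; have [_ [H _]] := HSol _ mp.
have Diff : forall k, XB_norm bnorm (fun n => zs k.+2 n - zs k.+1 n) <=
    2^-1 * XB_norm bnorm (fun n => zs k.+1 n - zs k n).
  move=> k.
  have [mh Nh] := P2 _ _ (Inv k.+1).1 (Inv k).1 (Inv k.+1).2 (Inv k).2.
  have [mv [ev Nv]] := HSol _ mh.
  have [mvs _] := xb_add HB (Inv k.+1).1 mv.
  have E : (fun n => zs k.+1 n + Sol (fun n => Psi (zs k.+1) n - Psi (zs k) n) n) = zs k.+2.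
    apply: Huniq; [exact: mvs | exact: (Inv k.+2).1 | move=> n].
    rewrite Badd zsub2 ev Eq.
    have := Eq k.+1 n; rewrite -/(zs k.+2) => ->.
    by rewrite addrC subrK.
  have -> : (fun n => zs k.+2 n - zs k.+1 n) = Sol (fun n => Psi (zs k.+1) n - Psi (zs k) n).
    by rewrite -E; apply/funext => n; rewrite zyz0.
  apply: le_trans Nv _.
  apply: le_trans (ler_wpM2l (ltW K0) Nh) _.
  rewrite mulrA; apply: ler_wpM2r => //.
  exact: (xb_norm_ge0 HB (xb_sub HB (Inv k.+1).1 (Inv k).1).1).
have mD : forall k l, XB_mem mem (fun n => zs l n - zs k n).
  by move=> k l; exact: (xb_sub HB (Inv l).1 (Inv k).1).1.
have Geo : forall k, XB_norm bnorm (fun n => zs k.+1 n - zs k n) <= (2^-1) ^+ k * eps.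
  elim => [|k IH].
    have -> : (fun n => zs 1 n - zs 0 n) = zs 1 by apply/funext => n; rewrite /= subr0.
    by rewrite expr0 mul1r; exact: (Inv 1).2.
  apply: le_trans (Diff k) _.
  by rewrite exprS -mulrA; apply: ler_wpM2l => //; rewrite invr_ge0 ler0n.
pose q := fun k : nat => 2 * eps * (2^-1) ^+ k.
have Cau0 : forall k m, XB_norm bnorm (fun n => zs (k + m)%N n - zs k n) <=
    2 * eps * ((2^-1) ^+ k - (2^-1) ^+ (k + m)%N).
  move=> k; elim => [|m IH].
    rewrite addn0 subrr mulr0.
    have -> : (fun n => zs k n - zs k n) = (fun _ => 0) by apply/funext => n; rewrite subrr.
    by rewrite N0.
  rewrite addnS.
  have -> : (fun n => zs (k + m).+1 n - zs k n) =
      (fun n => (zs (k + m).+1 n - zs (k + m)%N n) + (zs (k + m)%N n - zs k n)).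
    by apply/funext => n; rewrite addrA subrK.
  apply: le_trans (xb_add HB (mD _ _) (mD _ _)).2 _.
  apply: le_trans (lerD (Geo _) IH) _.
  rewrite exprS; apply: eqle; by field.
have Cau : forall k l, (k <= l)%N -> XB_norm bnorm (fun n => zs l n - zs k n) <= q k.
  move=> k l kl; rewrite -(subnKC kl).
  apply: le_trans (Cau0 _ _) _.
  rewrite /q ler_wpM2l ?mulr_ge0 ?ler0n ?ltW //.
  by rewrite gtrBl exprn_gt0 // invr_gt0 ltr0n.
have [z [mz [Nz Hzz]]] := xb_limit HB Inv Cau (@geo_small R (2 * eps)).
pose MB := `|MA| + c.
have MB0 : 0 <= MB by rewrite addr_ge0 // ltW.
have Bbound : forall m v, `|B m v| <= MB * `|v|.
  move=> m v; apply: le_trans (ler_normD _ _) _.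
  rewrite mulrDl; apply: lerD => //.
  apply: le_trans (HMA m v) _; rewrite ler_wpM2r // real_ler_norm //.
  exact: num_real.
have hz : forall k, `|z k| <= eps by move=> k; exact: le_trans (xb_pt HB k mz) Nz.
have hzs : forall j k, `|zs j k| <= eps by move=> j k; exact: le_trans (xb_pt HB k (Inv j).1) (Inv j).2.
have qmono : forall k, q k.+1 <= q k.
  move=> k; rewrite /q exprS; apply: ler_wpM2l; first by rewrite mulr_ge0 ?ler0n ?ltW.
  apply: ler_piMl; first by rewrite exprn_ge0 // invr_ge0 ler0n.
  by rewrite invf_le1 ?ler1n ?ltr0n.
have Eqz : forall n, z n - B (n - 1) (z (n - 1)) = Psi z n.
  move=> n; apply/eqP; rewrite -subr_eq0 -normr_le0; apply/ler_addgt0Pr => e e0; rewrite add0r.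
  pose C' := 1 + MB + theta.
  have C'0 : 0 < C' by rewrite /C'; lra.
  have [N HN] := @geo_small R (2 * eps) (e / C') (divr_gt0 e0 C'0).
  have E0 : zs N.+1 n - B (n - 1) (zs N.+1 (n - 1)) - Psi (zs N) n = 0 by rewrite Eq subrr.
  rewrite -[X in `|X|]subr0 -E0 zA3 -Bsub.
  apply: le_trans (ler_normB _ _) _.
  apply: le_trans (lerD (ler_normB _ _) (lexx _)) _.
  have b1 : `|z n - zs N.+1 n| <= q N := le_trans (Hzz n N.+1) (qmono N).
  have b2 : `|B (n - 1) (z (n - 1) - zs N.+1 (n - 1))| <= MB * q N.
    apply: le_trans (Bbound _ _) _; apply: ler_wpM2l => //.
    exact: le_trans (Hzz _ N.+1) (qmono N).
  have b3 : `|Psi z n - Psi (zs N) n| <= theta * q N.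
    apply: le_trans (P1 _ _ hz (hzs N) (n - 1)) _; apply: ler_wpM2l => //.
  apply: le_trans (lerD (lerD b1 b2) b3) _.
  have := HN N (leqnn N); rewrite ltr_pdivlMr // => h.
  apply: le_trans (ltW h); apply: eqle; rewrite /C' /q; ring.
split.
  exists (fun n => y n + z n); split.
    move=> n; have := Eqz (n + 1).
    rewrite /Psi /Phi /g /B /F !addrK => /eqP; rewrite subr_eq => /eqP ->.
    by rewrite zA4 (bl_add (Alin n)).
  have -> : (fun n => y n + z n - y n) = z by apply/funext => n; rewrite zyz0.
  by [].
move=> x x' ox mx Nx ox' mx' Nx'.
pose zz := fun n => x n - y n.
pose zz' := fun n => x' n - y n.
have hzz : forall k, `|zz k| <= eps by move=> k; exact: le_trans (xb_pt HB k mx) Nx.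
have hzz' : forall k, `|zz' k| <= eps by move=> k; exact: le_trans (xb_pt HB k mx') Nx'.
pose w := fun n => x n - x' n.
have Ew : w = fun n => zz n - zz' n by apply/funext => n; rewrite /zz /zz' zxy.
have mw : XB_mem mem w by rewrite Ew; exact: (xb_sub HB mx mx').1.
have [mh Nh] := P2 zz zz' mx mx' Nx Nx'.
rewrite -Ew in Nh.
have [mv [ev Nv]] := HSol _ mh.
have Eqw : forall n, w n - B (n - 1) (w (n - 1)) = Psi zz n - Psi zz' n.
  move=> n.
  have e1 := ox (n - 1); have e2 := ox' (n - 1).
  rewrite subrK in e1 e2.
  rewrite /Psi /Phi zA1 /zz /zz' !subrKC -linearB zxy /w e1 e2 /B /F.
  by rewrite (bl_sub (Alin (n - 1))) [X in X - _ = _]zsub2 zuv.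
have vw : Sol (fun n => Psi zz n - Psi zz' n) = w.
  apply: Huniq; [exact: mv | exact: mw | move=> n].
  by rewrite ev Eqw.
have Nw0 : XB_norm bnorm w = 0.
  have Nwg := xb_norm_ge0 HB mw.
  have : XB_norm bnorm w <= 2^-1 * XB_norm bnorm w.
    rewrite -{1}vw; apply: le_trans Nv _.
    apply: le_trans (ler_wpM2l (ltW K0) Nh) _.
    by rewrite mulrA; apply: ler_wpM2r.
  move=> h; apply/eqP; rewrite eq_le Nwg andbT.
  lra.
apply/funext => n; apply/eqP; rewrite -subr_eq0; apply/eqP.
exact: (xb_eq0 HB mw Nw0 n).
Qed.
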